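(* Model (LP) (defined in the context) is equivalent to model (MIP): the optimal objective values of (LP) and (MIP) coincide, and every optimal solution $(\lambda^*,\mathbf{s}^{-*},\mathbf{s}^{+*},\delta^*,\boldsymbol{\alpha}^*,\gamma^* )$ of (LP) satisfies $\gamma^*=1$ and $\alpha^*_j\in\{0,1\}$ for all $j$, so that it is an optimal solution of (MIP).
   Context: Data envelopment analysis setting. There are $n$ decision making units (DMUs) indexed by $J=\{1,\dots,n\}$, each using $m$ inputs to produce $s$ outputs; DMU$_j$ has input vector $\mathbf{x}_j=(x_{1j},\dots,x_{mj})^T\in\mathbb{R}^m_+$ and output vector $\mathbf{y}_j=(y_{1j},\dots,y_{sj})^T\in\mathbb{R}^s_+$; $\mathbf{X}=[\mathbf{x}_1\cdots\mathbf{x}_n]$, $\mathbf{Y}=[\mathbf{y}_1\cdots\mathbf{y}_n]$. Define $\mathbf{R}^-=(R^-_1,\dots,R^-_m)^T$, $\mathbf{R}^+=(R^+_1,\dots,R^+_s)^T$ by $1/R^-_i=\max_{j}x_{ij}-\min_j x_{ij}$ and $1/R^+_r=\max_j y_{rj}-\min_j y_{rj}$. For $o\in J$, the RAM model is: $\rho_o=\min\, 1-\frac{1}{m+s}(\mathbf{R}^{-T}\mathbf{s}^-+\mathbf{R}^{+T}\mathbf{s}^+)$ subject to $\mathbf{X}\lambda+\mathbf{s}^-=\mathbf{x}_o$, $\mathbf{Y}\lambda-\mathbf{s}^+=\mathbf{y}_o$, $\mathbf{1}^T\lambda=1$, $\lambda\ge 0,\mathbf{s}^-\ge0,\mathbf{s}^+\ge0$.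 A DMU is RAM-efficient if its optimal value $\rho$ equals $1$; let $E\subseteq J$ be the index set of RAM-efficient DMUs and $\mathbf{X}_E,\mathbf{Y}_E$ the submatrices of $\mathbf{X},\mathbf{Y}$ with columns in $E$. Fix the evaluated DMU $o\in J$. Model (MIP): maximize $\mathbf{1}^T\boldsymbol{\alpha}+\gamma$ over $\lambda\in\mathbb{R}^{|E|}$, $\mathbf{s}^-\in\mathbb{R}^m$, $\mathbf{s}^+\in\mathbb{R}^s$, $\delta\in\mathbb{R}$, $\boldsymbol{\alpha}\in\{0,1\}^{|E|}$, $\gamma\in\{0,1\}$ subject to $\mathbf{X}_E\lambda+\mathbf{s}^--\mathbf{x}_o\delta=\mathbf{0}$, $\mathbf{Y}_E\lambda-\mathbf{s}^+-\mathbf{y}_o\delta=\mathbf{0}$, $\mathbf{1}^T\lambda-\delta=0$, $\mathbf{R}^{-T}\mathbf{s}^-+\mathbf{R}^{+T}\mathbf{s}^+-(m+s)(1-\rho_o)\delta=0$, $\boldsymbol{\alpha}\le\lambda$, $\gamma\le\delta$, $\lambda\ge\mathbf{0}$, $\mathbf{s}^-\ge\mathbf{0}$, $\mathbf{s}^+\ge\mathbf{0}$, $\delta\ge0$. Model (LP): the same as (MIP) except that the binary requirements are replaced by $\mathbf{0}\le\boldsymbol{\alpha}\le\mathbf{1}$ (with $\boldsymbol{\alpha}\in\mathbb{R}^{|E|}$) and $0\le\gamma\le1$ (with $\gamma\in\mathbb{R}$). *)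

(* Defs.v *)
From mathcomp Require Import all_boot all_order all_algebra.
Set Implicit Arguments. Unset Strict Implicit. Unset Printing Implicit Defensive.
Import Order.TTheory GRing.Theory Num.Theory.
Local Open Scope ring_scope.

Section DEA.
Variables (R : realFieldType) (m s n : nat).
Variables (X : 'I_m -> 'I_n -> R) (Y : 'I_s -> 'I_n -> R).

(* max_j x_ij and min_j x_ij, computed as big max/min over all DMUs
   seeded with the value of some DMU j0 (so they are the true max/min). *)
Definition rowmax (Z : 'I_n -> R) (j0 : 'I_n) := \big[Num.max/Z j0]_j Z j.
Definition rowmin (Z : 'I_n -> R) (j0 : 'I_n) := \big[Num.min/Z j0]_j Z j.

Definition Rminus (j0 : 'I_n) (i : 'I_m) : R :=
  1 / (rowmax (X i) j0 - rowmin (X i) j0).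
Definition Rplus (j0 : 'I_n) (r : 'I_s) : R :=
  1 / (rowmax (Y r) j0 - rowmin (Y r) j0).

Definition RAM_feasible (o : 'I_n) (lam : 'I_n -> R) (sm : 'I_m -> R)
    (sp : 'I_s -> R) : Prop :=
  (forall i, \sum_j X i j * lam j + sm i = X i o) /\
  (forall r, \sum_j Y r j * lam j - sp r = Y r o) /\
  \sum_j lam j = 1 /\
  (forall j, 0 <= lam j) /\
  (forall i, 0 <= sm i) /\
  (forall r, 0 <= sp r).

Definition wslack (j0 : 'I_n) (sm : 'I_m -> R) (sp : 'I_s -> R) : R :=
  \sum_i Rminus j0 i * sm i + \sum_r Rplus j0 r * sp r.

Definition RAM_obj (j0 : 'I_n) sm sp : R :=
  1 - wslack j0 sm sp / (m + s)%:R.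

Definition RAM_opt_value (o : 'I_n) (v : R) : Prop :=
  (exists lam sm sp, RAM_feasible o lam sm sp /\ RAM_obj o sm sp = v) /\
  (forall lam sm sp, RAM_feasible o lam sm sp -> v <= RAM_obj o sm sp).

(* A candidate solution (lambda, s^-, s^+, delta, alpha, gamma) of (LP)/(MIP).
   lambda and alpha are indexed by all DMUs, but only the components
   with index in E are variables of the models (the others never occur). *)
Record sol := Sol {
  lam : 'I_n -> R; sm : 'I_m -> R; sp : 'I_s -> R;
  del : R; al : 'I_n -> R; ga : R }.

Variables (E : {set 'I_n}) (o : 'I_n) (rho_o : R).

Definition common_feasible (z : sol) : Prop :=
  (forall i, \sum_(j in E) X i j * lam z j + sm z i - X i o * del z = 0) /\
  (forall r, \sum_(j in E) Y r j * lam z j - sp z r - Y r o * del z = 0) /\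
  \sum_(j in E) lam z j - del z = 0 /\
  wslack o (sm z) (sp z) - (m + s)%:R * (1 - rho_o) * del z = 0 /\
  (forall j, j \in E -> al z j <= lam z j) /\
  ga z <= del z /\
  (forall j, j \in E -> 0 <= lam z j) /\
  (forall i, 0 <= sm z i) /\
  (forall r, 0 <= sp z r) /\
  0 <= del z.

Definition MIP_feasible (z : sol) : Prop :=
  [/\ common_feasible z,
      (forall j, j \in E -> al z j = 0 \/ al z j = 1) &
      (ga z = 0 \/ ga z = 1)].

Definition LP_feasible (z : sol) : Prop :=
  [/\ common_feasible z,
      (forall j, j \in E -> 0 <= al z j <= 1) &
      0 <= ga z <= 1].

Definition obj (z : sol) : R := \sum_(j in E) al z j + ga z.

Definition optimal (feas : sol -> Prop) (z : sol) : Prop :=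
  feas z /\ forall z', feas z' -> obj z' <= obj z.

Definition opt_value (feas : sol -> Prop) (v : R) : Prop :=
  (exists z, feas z /\ obj z = v) /\ forall z, feas z -> obj z <= v.

End DEA.

(* Main.v *)
Require Import Defs.
From mathcomp Require Import all_boot all_order all_algebra.
From mathcomp Require Import ring lra.
From Stdlib Require Import Classical.
Import Order.TTheory GRing.Theory Num.Theory.
Local Open Scope ring_scope.
Set Implicit Arguments. Unset Strict Implicit.

Lemma rowmax_seed (R : realFieldType) n (Z : 'I_n -> R) j0 j1 : rowmax Z j0 = rowmax Z j1.
Proof. by apply/le_anti/andP; split; apply: bigmax_le => // *; apply: le_bigmax. Qed.
Lemma rowmin_seed (R : realFieldType) n (Z : 'I_n -> R) j0 j1 : rowmin Z j0 = rowmin Z j1.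
Proof. by apply/le_anti/andP; split; apply: le_bigmin => // *; apply: bigmin_le. Qed.

Lemma wslack_seed (R : realFieldType) m s n (X : 'I_m -> 'I_n -> R) (Y : 'I_s -> 'I_n -> R)
  j0 j1 sm sp : wslack X Y j0 sm sp = wslack X Y j1 sm sp.
Proof.
rewrite /wslack /Rminus /Rplus.
congr (_ + _); apply: eq_bigr => i _; by rewrite (rowmax_seed _ j0 j1) (rowmin_seed _ j0 j1).
Qed.

Lemma wslack_ge0 (R : realFieldType) m s n (X : 'I_m -> 'I_n -> R) (Y : 'I_s -> 'I_n -> R)
  o (HRm : forall i, rowmin (X i) o < rowmax (X i) o)
    (HRp : forall r, rowmin (Y r) o < rowmax (Y r) o) j sm sp :
  (forall i, 0 <= sm i) -> (forall r, 0 <= sp r) -> 0 <= wslack X Y j sm sp.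
Proof.
move=> H1 H2; rewrite (wslack_seed X Y j o) /wslack.
apply: addr_ge0; apply: sumr_ge0 => i _; apply: mulr_ge0 => //.
  by rewrite /Rminus div1r invr_ge0 subr_ge0 ltW.
by rewrite /Rplus div1r invr_ge0 subr_ge0 ltW.
Qed.

Lemma wslack_comb (R : realFieldType) m s n (X : 'I_m -> 'I_n -> R) (Y : 'I_s -> 'I_n -> R)
  j sm1 sp1 sm2 sp2 c :
  wslack X Y j (fun i => sm1 i + c * sm2 i) (fun r => sp1 r + c * sp2 r) =
  wslack X Y j sm1 sp1 + c * wslack X Y j sm2 sp2.
Proof.
rewrite /wslack mulrDr !mulr_sumr.
rewrite (eq_bigr (fun i => Rminus X j i * sm1 i + c * (Rminus X j i * sm2 i))); last first.
  by move=> i _; ring.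
rewrite [in X in _ + X = _](eq_bigr (fun i => Rplus Y j i * sp1 i + c * (Rplus Y j i * sp2 i))); last first.
  by move=> i _; ring.
rewrite !big_split /=; ring.
Qed.

Lemma sum_comb (R : realFieldType) (I : finType) (P : pred I) (F G H : I -> R) c :
  \sum_(j | P j) F j * (G j + c * H j) = \sum_(j | P j) F j * G j + c * \sum_(j | P j) F j * H j.
Proof.
rewrite mulr_sumr -big_split /=; apply: eq_bigr => j _; ring.
Qed.

Lemma sum_comb1 (R : realFieldType) (I : finType) (P : pred I) (G H : I -> R) c :
  \sum_(j | P j) (G j + c * H j) = \sum_(j | P j) G j + c * \sum_(j | P j) H j.
Proof. by rewrite mulr_sumr -big_split. Qed.

Definition comb (R : realFieldType) m s n (z w : sol R m s n) (c : R) : sol R m s n :=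
  Sol (fun k => lam z k + c * lam w k) (fun i => sm z i + c * sm w i)
      (fun r => sp z r + c * sp w r) (del z + c * del w) (fun _ => 0) 0.

Lemma cf_comb (R : realFieldType) m s n (X : 'I_m -> 'I_n -> R) (Y : 'I_s -> 'I_n -> R)
  E o rho z w c : 0 <= c ->
  common_feasible X Y E o rho z -> common_feasible X Y E o rho w ->
  common_feasible X Y E o rho (comb z w c).
Proof.
move=> c0 [a1 [b1 [d1 [e1 [f1 [g1 [h1 [i1 [j1 k1]]]]]]]]]
  [a2 [b2 [d2 [e2 [f2 [g2 [h2 [i2 [j2 k2]]]]]]]]]; rewrite /comb /common_feasible /=.
split; [move=> i; rewrite sum_comb; have := a1 i; have := a2 i; nra|].
split; [move=> r; rewrite sum_comb; have := b1 r; have := b2 r; nra|].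
split; [rewrite sum_comb1; nra|].
split.
  rewrite wslack_comb; move: e1 e2; set K := (_ * (1 - rho)) => e1 e2.
  transitivity ((wslack X Y o (sm z) (sp z) - K * del z) + c * (wslack X Y o (sm w) (sp w) - K * del w)).
    ring.
  by rewrite e1 e2 mulr0 addr0.
split; [move=> j jE; have := h1 j jE; have := h2 j jE; nra|].
split; [nra|].
split; [move=> j jE; have := h1 j jE; have := h2 j jE; nra|].
split; [move=> i; have := i1 i; have := i2 i; nra|].
split; [move=> r; have := j1 r; have := j2 r; nra|].
nra.
Qed.

Lemma build (R : realFieldType) m s n (X : 'I_m -> 'I_n -> R) (Y : 'I_s -> 'I_n -> R)
  E o rho (r : seq 'I_n) z0 :
  common_feasible X Y E o rho z0 -> 1 <= del z0 ->
  exists w, [/\ common_feasible X Y E o rho w, 1 <= del w &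
    forall j, j \in r -> j \in E ->
      (exists w', common_feasible X Y E o rho w' /\ 0 < lam w' j) -> 1 <= lam w j].
Proof.
move=> H0 D0; elim: r => [|j r [w [Hw Dw Aw]]].
  by exists z0; split => // j; rewrite in_nil.
have lw0 : forall k, k \in E -> 0 <= lam w k.
  by move=> k kE; case: Hw => _ [_ [_ [_ [_ [_ [h _]]]]]]; apply: h.
case: (classic (j \in E /\ exists w', common_feasible X Y E o rho w' /\ 0 < lam w' j)).
  move=> [jE [w' [Hw' Pw']]].
  have lw'0 : forall k, k \in E -> 0 <= lam w' k.
    by move=> k kE; case: Hw' => _ [_ [_ [_ [_ [_ [h _]]]]]]; apply: h.
  have dw'0 : 0 <= del w' by case: Hw' => _ [_ [_ [_ [_ [_ [_ [_ [_ h]]]]]]]].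
  have c0 : 0 <= (lam w' j)^-1 by rewrite invr_ge0 ltW.
  exists (comb w w' (lam w' j)^-1); split.
  - exact: cf_comb.
  - rewrite /=; have := mulr_ge0 c0 dw'0; lra.
  move=> k; rewrite in_cons => /orP [/eqP -> | kr] kE Hk /=.
    rewrite mulVf ?gt_eqF //; have := lw0 j jE; lra.
  have := Aw k kr kE Hk; have := mulr_ge0 c0 (lw'0 k kE); lra.
move=> Hn; exists w; split => // k; rewrite in_cons => /orP [/eqP -> | kr] kE Hk.
  by exfalso; apply: Hn; split.
exact: Aw.
Qed.

Lemma sum_delta (R : realFieldType) n (F : 'I_n -> R) j :
  \sum_k F k * (k == j)%:R = F j.
Proof.
rewrite (bigD1 j) //= eqxx mulr1 big1 ?addr0 // => k /negbTE ->; by rewrite mulr0.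
Qed.

Lemma sum_delta1 (R : realFieldType) n (j : 'I_n) :
  \sum_k (k == j)%:R = 1 :> R.
Proof.
rewrite (bigD1 j) //= eqxx big1 ?addr0 // => k /negbTE ->; by [].
Qed.

Lemma sum_sub (R : realFieldType) n (F G H : 'I_n -> R) c j :
  \sum_k F k * (G k + c * (H k - (k == j)%:R)) =
  \sum_k F k * G k + c * (\sum_k F k * H k - F j).
Proof.
rewrite (eq_bigr (fun k => (F k * G k + c * (F k * H k)) - c * (F k * (k==j)%:R))); last first.
  by move=> k _; ring.
rewrite sumrB big_split /= -!mulr_sumr sum_delta; ring.
Qed.

Lemma RAM_sub (R : realFieldType) m s n (X : 'I_m -> 'I_n -> R) (Y : 'I_s -> 'I_n -> R)
  o j l0 sm0 sp0 mu tm tp c :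
  RAM_feasible X Y o l0 sm0 sp0 -> RAM_feasible X Y j mu tm tp -> l0 j = c ->
  RAM_feasible X Y o (fun k => l0 k + c * (mu k - (k == j)%:R))
    (fun i => sm0 i + c * tm i) (fun r => sp0 r + c * tp r).
Proof.
move=> [a1 [b1 [d1 [e1 [f1 g1]]]]] [a2 [b2 [d2 [e2 [f2 g2]]]]] lj.
have c0 : 0 <= c by rewrite -lj.
split; [move=> i; rewrite sum_sub; have := a1 i; have := a2 i; nra|].
split; [move=> r; rewrite sum_sub; have := b1 r; have := b2 r; nra|].
split.
  by rewrite big_split /= -mulr_sumr sumrB d1 d2 sum_delta1 subrr mulr0 addr0.
split.
  move=> k; case: (eqVneq k j) => [-> | kj].
    rewrite lj /= mulrBr mulr1; have := e2 j; nra.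
  rewrite /= subr0; have := e1 k; have := e2 k; nra.
split; [move=> i; have := f1 i; have := f2 i; nra|].
move=> r; have := g1 r; have := g2 r; nra.
Qed.

Lemma sum_in_E (R : realFieldType) n (E : {set 'I_n}) (G : 'I_n -> R) :
  (forall j, j \notin E -> G j = 0) -> \sum_(j in E) G j = \sum_j G j.
Proof.
move=> H; rewrite [RHS](bigID (fun j => j \in E)) /= [X in _ + X]big1 ?addr0 //.
Qed.

Unset Implicit Arguments.
Theorem theorem2 (R : realFieldType) (m s n : nat)
    (X : 'I_m -> 'I_n -> R) (Y : 'I_s -> 'I_n -> R)
    (HX : forall i j, 0 <= X i j) (HY : forall r j, 0 <= Y r j)
    (o : 'I_n)
    (HRm : forall i, rowmin (X i) o < rowmax (X i) o)
    (HRp : forall r, rowmin (Y r) o < rowmax (Y r) o)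
    (rho : 'I_n -> R) (Hrho : forall j, RAM_opt_value X Y j (rho j)) :
  let E := [set j | rho j == 1] in
  (exists v, opt_value E (LP_feasible X Y E o (rho o)) v /\
             opt_value E (MIP_feasible X Y E o (rho o)) v) /\
  (forall z, optimal E (LP_feasible X Y E o (rho o)) z ->
     [/\ ga z = 1,
         (forall j, j \in E -> al z j = 0 \/ al z j = 1) &
         optimal E (MIP_feasible X Y E o (rho o)) z]).
Proof.
move=> E.
set N : R := (m + s)%:R.
have [[l0 [sm0 [sp0 [F0 O0]]]] Opt0] := Hrho o.
have supp : forall j, j \notin E -> l0 j = 0.
  move=> j jE; apply/eqP; apply: contraT => lj0.
  have lj : 0 < l0 j by rewrite lt_def lj0; case: F0 => _ [_ [_ [h _]]]; apply: h.
  have rj : rho j != 1 by move: jE; rewrite inE.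
  have [[mu [tm [tp [Fj Oj]]]] _] := Hrho j.
  have wne : wslack X Y j tm tp / N != 0.
    apply: contra rj => /eqP h; by rewrite -Oj /RAM_obj -/N h subr0.
  have Nne : N != 0 by apply: contra wne => /eqP ->; rewrite invr0 mulr0.
  have Ngt : 0 < N by rewrite lt_def Nne ler0n.
  have wge : 0 <= wslack X Y j tm tp.
    by apply: (wslack_ge0 HRm HRp); case: Fj => _ [_ [_ [_ [h1 h2]]]].
  have wgt : 0 < wslack X Y j tm tp.
    by rewrite lt_def wge andbT; apply: contra wne => /eqP ->; rewrite mul0r.
  have Fn := RAM_sub F0 Fj (erefl (l0 j)).
  have := Opt0 _ _ _ Fn.
  rewrite /RAM_obj wslack_comb (wslack_seed X Y o j tm tp) -/N mulrDl.
  have := divr_gt0 (mulr_gt0 lj wgt) Ngt.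
  move: O0; rewrite /RAM_obj -/N => h1 h2 h3.
  have : (0:R) < 0 by lra.
  by rewrite ltxx.
pose z0 := Sol l0 sm0 sp0 1 (fun _ => 0) 0.
case: F0 => [a0 [b0 [d0 [e0 [f0 g0]]]]].
have H0 : common_feasible X Y E o (rho o) z0.
  rewrite /z0; split => /=.
    move=> i; rewrite (sum_in_E (G := fun j => X i j * l0 j)) ?a0 ?mulr1 ?subrr //.
    by move=> j /supp ->; rewrite mulr0.
  split.
    move=> r; rewrite (sum_in_E (G := fun j => Y r j * l0 j)) ?b0 ?mulr1 ?subrr //.
    by move=> j /supp ->; rewrite mulr0.
  split; first by rewrite (sum_in_E (G := l0)) ?d0 ?subrr.
  split.
    move: O0; rewrite /RAM_obj -/N mulr1 => <-.
    have [Nz | Nnz] := eqVneq N 0.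
      have : (m + s)%N == 0%N by rewrite -(pnatr_eq0 R) -/N Nz.
      rewrite addn_eq0 => /andP [/eqP m0 /eqP s0].
      rewrite Nz mul0r subr0 /wslack !big1 ?addr0 // => i _.
        by exfalso; have := ltn_ord i; rewrite [X in (_ < X)%N]s0.
      by exfalso; have := ltn_ord i; rewrite [X in (_ < X)%N]m0.
    rewrite (_ : 1 - (1 - _ / N) = wslack X Y o sm0 sp0 / N); last by ring.
    by rewrite mulrCA mulfV // mulr1 subrr.
  split; first by move=> j _; apply: e0.
  split; first by [].
  split; first by move=> j _; apply: e0.
  by split => //; split.
have [w [Hw Dw Aw]] := build (enum E) H0 (lexx 1).
have lw0 : forall k, k \in E -> 0 <= lam w k.
  by move=> k kE; case: Hw => _ [_ [_ [_ [_ [_ [h _]]]]]]; apply: h.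
pose zs := Sol (lam w) (sm w) (sp w) (del w) (fun k => if 1 <= lam w k then 1 else 0) 1.
have MIPzs : MIP_feasible X Y E o (rho o) zs.
  split.
  - case: Hw => [a [b [d [e [_ [_ [h [i [j k]]]]]]]]].
    split => //; split => //; split => //; split => //.
    split; first by move=> k' kE /=; case: ifP => // _; apply: lw0.
    by split.
  - by move=> k _ /=; case: ifP; [right|left].
  - by right.
have MIP_LP : forall z, MIP_feasible X Y E o (rho o) z -> LP_feasible X Y E o (rho o) z.
  move=> z [H1 H2 H3]; split => //.
    by move=> k kE; case: (H2 k kE) => ->; rewrite ?lexx ?ler01.
  by case: H3 => ->; rewrite ?lexx ?ler01.
have bnd_al : forall z, LP_feasible X Y E o (rho o) z -> forall j, j \in E -> al z j <= al zs j.
  move=> z [H1 H2 H3] j jE /=; case: ifP => h.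
    by case/andP: (H2 j jE).
  have : ~ (exists w', common_feasible X Y E o (rho o) w' /\ 0 < lam w' j).
    by move=> act; have := Aw j; rewrite mem_enum => /(_ jE jE act); rewrite h.
  move=> nact; have hal : al z j <= lam z j.
    by case: H1 => _ [_ [_ [_ [hal _]]]]; apply: hal.
  apply: (le_trans hal); rewrite leNgt; apply/negP => hp; apply: nact.
  by exists z; split.
have bnd_ga : forall z, LP_feasible X Y E o (rho o) z -> ga z <= ga zs.
  by move=> z [_ _ /andP [_ h]].
have bnd : forall z, LP_feasible X Y E o (rho o) z -> obj E z <= obj E zs.
  move=> z Hz; rewrite /obj; apply: lerD; last exact: bnd_ga.
  by apply: ler_sum => j jE; apply: bnd_al.
split.
  exists (obj E zs); split; split; first by exists zs; split => //; apply: MIP_LP.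
  - exact: bnd.
  - by exists zs.
  by move=> z /MIP_LP; apply: bnd.
move=> z [Hz Oz].
have e1 : obj E zs <= obj E z by apply: Oz; apply: MIP_LP.
have e2 := bnd z Hz.
have hsum : \sum_(j in E) (al zs j - al z j) + (ga zs - ga z) = 0.
  move: e1 e2; rewrite /obj sumrB; lra.
have p1 : 0 <= \sum_(j in E) (al zs j - al z j).
  by apply: sumr_ge0 => j jE; rewrite subr_ge0; apply: bnd_al.
have p2 : 0 <= ga zs - ga z by rewrite subr_ge0; apply: bnd_ga.
move: hsum => /eqP; rewrite paddr_eq0 // => /andP [/eqP s00 /eqP g00].
have ga1 : ga z = 1 by move: g00 => /eqP; rewrite subr_eq0 => /eqP <-.
have alE : forall j, j \in E -> al z j = al zs j.
  move=> j jE; apply/eqP; rewrite eq_sym -subr_eq0; apply/eqP.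
  apply: (psumr_eq0P _ s00) => // k kE; rewrite subr_ge0; exact: bnd_al.
have al01 : forall j, j \in E -> al z j = 0 \/ al z j = 1.
  by move=> j jE; rewrite alE //= ; case: ifP; [right|left].
have MIPz : MIP_feasible X Y E o (rho o) z.
  by case: Hz => H1 _ _; split => //; right.
split => //; split => // z' Hz'; apply: Oz; exact: MIP_LP.
Qed.
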